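(* Let $I$ be a general ring and $e=e^2\in I$. Then $QN(eIe)=eIe\cap QN(I)$.
   Context: A general ring is an associative ring not necessarily having an identity; $eIe=\{eae\mid a\in I\}$ is a general ring under the operations of $I$. For a general ring $K$ and $p,q\in K$, $p*q=p+q-pq$; $Q(K)=\{q\in K\mid p*q=0=q*p\text{ for some }p\in K\}$; $\mathrm{comm}_K(q)=\{x\in K\mid xq=qx\}$; $QN(K)=\{q\in K\mid qx\in Q(K)\text{ for every }x\in\mathrm{comm}_K(q)\}$. *)

(* Defs.v *)
From HB Require Import structures.
From mathcomp Require Import all_boot all_algebra.
Set Implicit Arguments. Unset Strict Implicit. Unset Printing Implicit Defensive.
Import GRing.Theory.
Local Open Scope ring_scope.

Record genRing := GenRing {
  gcarrier :> zmodType;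
  gmul : gcarrier -> gcarrier -> gcarrier;
  gmulA : forall x y z, gmul x (gmul y z) = gmul (gmul x y) z;
  gmulDl : forall x y z, gmul (x + y) z = gmul x z + gmul y z;
  gmulDr : forall x y z, gmul x (y + z) = gmul x y + gmul x z
}.

Section Defs.
Variable I : genRing.
Local Notation "x ** y" := (gmul x y) (at level 40, left associativity).

Definition circ (p q : I) : I := p + q - p ** q.

(* A general subring K of I is given by its carrier predicate K : I -> Prop,
   with the operations of I. *)
Definition Qset (K : I -> Prop) (q : I) : Prop :=
  K q /\ exists p, K p /\ circ p q = 0 /\ circ q p = 0.

Definition commset (K : I -> Prop) (q : I) (x : I) : Prop :=
  K x /\ x ** q = q ** x.

Definition QNset (K : I -> Prop) (q : I) : Prop :=
  K q /\ forall x, commset K q x -> Qset K (q ** x).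

Definition wholeset : I -> Prop := fun _ => True.

Definition corner (e : I) : I -> Prop := fun y => exists a, y = e ** a ** e.
End Defs.

(* Main.v *)
Require Import Defs.
From mathcomp Require Import all_boot all_algebra.
Import GRing.Theory.
Local Open Scope ring_scope.

Section H.
Variable I : genRing.
Local Notation "x ** y" := (gmul x y) (at level 40, left associativity).

Lemma gmulBl (x y z : I) : (x - y) ** z = x ** z - y ** z.
Proof.
have : (x - y) ** z + y ** z = x ** z by rewrite -gmulDl subrK.
by move=> <-; rewrite addrK.
Qed.

Lemma gmulBr (x y z : I) : z ** (x - y) = z ** x - z ** y.
Proof.
have : z ** (x - y) + z ** y = z ** x by rewrite -gmulDr subrK.
by move=> <-; rewrite addrK.
Qed.

Lemma corner_l (e y : I) : e ** e = e -> corner e y -> e ** y = y.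
Proof. by move=> he [a ->]; rewrite !gmulA he. Qed.

Lemma corner_r (e y : I) : e ** e = e -> corner e y -> y ** e = y.
Proof. by move=> he [a ->]; rewrite -!gmulA he. Qed.

Lemma corner_intro (e y : I) : e ** y = y -> y ** e = y -> corner e y.
Proof. by move=> h1 h2; exists y; rewrite h1 h2. Qed.

Lemma circ_sol (p a : I) : circ p a = 0 -> p = p ** a - a.
Proof.
rewrite /circ => /eqP; rewrite subr_eq0 => /eqP <-.
by rewrite addrK.
Qed.

Lemma circ_sol' (p a : I) : circ a p = 0 -> p = a ** p - a.
Proof.
rewrite /circ => /eqP; rewrite subr_eq0 => /eqP <-.
by rewrite [a + p]addrC addrK.
Qed.
End H.
Arguments corner_l {I e y}. Arguments corner_r {I e y}. Arguments circ_sol {I p a}. Arguments circ_sol' {I p a}.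

Theorem lemma3p4 (I : genRing) (e : I) (he : gmul e e = e) :
  forall q : I, QNset (corner e) q <-> (corner e q /\ QNset (@wholeset I) q).
Proof.
move=> q; split.
- move=> [Kq HQ]; split => //; split => // x [_ cx].
  have eq1 := corner_l he Kq; have eq2 := corner_r he Kq.
  set x' := gmul (gmul e x) e.
  have Kx' : corner e x' by exists x.
  have qx' : gmul q x' = gmul q x.
    by rewrite /x' !gmulA eq2 -cx -gmulA eq2.
  have cx' : gmul x' q = gmul q x'.
    by rewrite qx' /x' -!gmulA eq1 cx gmulA eq1.
  have [_ [p [Kp [h1 h2]]]] := HQ x' (conj Kx' cx').
  by split => //; exists p; rewrite -qx'.
- move=> [Kq [_ HQ]]; split => // x [Kx cx].
  have [_ [p [_ [h1 h2]]]] := HQ x (conj Logic.I cx).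
  have eq1 := corner_l he Kq; have eq2 := corner_r he Kx.
  have l : gmul e (gmul q x) = gmul q x by rewrite gmulA eq1.
  have r : gmul (gmul q x) e = gmul q x by rewrite -gmulA eq2.
  have Kqx : corner e (gmul q x) by apply: corner_intro.
  split => //; exists p; split => //.
  apply: corner_intro.
  + by rewrite (circ_sol' h2) gmulBr gmulA l.
  + by rewrite (circ_sol h1) gmulBl -gmulA r.
Qed.
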